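(* Let $G$ be a bipartite graph with color classes $E$ and $V$, and let the splitting $V\cup E=S\cup T$ induce a non-empty directed cut $C$ of $G$. Then the root polytope $Q_G$ has a supporting hyperplane which contains none of the vertices of $Q_G$ corresponding to edges in $C$ but contains all other vertices of $Q_G$.
   Context: Bipartite graphs have no multiple edges. $Q_G\subset\mathbf R^E\oplus\mathbf R^V$ is the convex hull of the points $\mathbf i_{\{e\}}+\mathbf i_{\{v\}}$ over edges $ev$ of $G$ ($\mathbf i$ = indicator vector); the vertex $\mathbf i_{\{e\}}+\mathbf i_{\{v\}}$ corresponds to the edge $ev$. The cut induced by a splitting $V\cup E=S\cup T$ into disjoint sets is the set of edges between $S$ and $T$; it is directed if $G$ has no edges between $E\cap S$ and $V\cap T$. *)

(* Defs.v *)
From HB Require Import structures.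
From mathcomp Require Import all_boot all_order all_algebra.
Set Implicit Arguments. Unset Strict Implicit. Unset Printing Implicit Defensive.
Import Order.TTheory GRing.Theory Num.Theory.
Local Open Scope ring_scope.

(* A bipartite graph with colour classes E and V (finite types) and no
   multiple edges is a set of pairs G : {set E * V}; (e,v) \in G means that
   e and v are adjacent.  The ambient space R^E (+) R^V is modelled as
   {ffun (E + V) -> R}. *)

Section Root.
Variables (R : realFieldType) (E V : finType).

Definition rpoint (ev : E * V) : {ffun (E + V)%type -> R} :=
  [ffun i => ((i == inl ev.1) || (i == inr ev.2))%:R].

Definition root_polytope (G : {set E * V}) : {ffun (E + V)%type -> R} -> Prop :=
  fun x => exists lam : E * V -> R,
    [/\ forall ev, ev \in G -> 0 <= lam ev,
        \sum_(ev in G) lam ev = 1 &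
        forall i, x i = \sum_(ev in G) lam ev * rpoint ev i].

Definition dotf (a x : {ffun (E + V)%type -> R}) : R := \sum_i a i * x i.

(* S is one side of the splitting V u E = S u T, T = complement of S *)
Definition in_cut (S : {set (E + V)%type}) (ev : E * V) : bool :=
  (inl ev.1 \in S) != (inr ev.2 \in S).

Definition cut (G : {set E * V}) (S : {set (E + V)%type}) : {set E * V} :=
  [set ev in G | in_cut S ev].

Definition directed_cut (G : {set E * V}) (S : {set (E + V)%type}) : Prop :=
  forall ev, ev \in G -> ~ ((inl ev.1 \in S) && (inr ev.2 \notin S)).

Definition supporting_hyperplane (P : {ffun (E + V)%type -> R} -> Prop)
  (a : {ffun (E + V)%type -> R}) (c : R) : Prop :=
  (exists i, a i != 0) /\ forall x, P x -> dotf a x <= c.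

End Root.

(* Main.v *)
Require Import Defs.
From mathcomp Require Import all_boot all_order all_algebra.
Import Order.TTheory GRing.Theory Num.Theory.
Local Open Scope ring_scope.

Lemma dotf_rpoint (R : realFieldType) (E V : finType) (a : {ffun (E + V)%type -> R}) ev :
  dotf a (rpoint R ev) = a (inl ev.1) + a (inr ev.2).
Proof.
rewrite /dotf (bigD1 (inl ev.1)) //= (bigD1 (inr ev.2)) //= big1.
  by rewrite !ffunE !eqxx /= ?orbT !mulr1 addr0.
move=> i /andP [Hi1 Hi2]; rewrite ffunE.
by rewrite (negbTE Hi1) (negbTE Hi2) mulr0.
Qed.

Theorem lemma3p5 (R : realFieldType) (E V : finType) (G : {set E * V})
  (S : {set (E + V)%type}) :
  directed_cut G S -> cut G S != set0 ->
  exists (a : {ffun (E + V)%type -> R}) (c : R),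
    [/\ supporting_hyperplane (root_polytope G) a c,
        forall ev, ev \in cut G S -> dotf a (rpoint R ev) != c &
        forall ev, ev \in G -> ev \notin cut G S -> dotf a (rpoint R ev) = c].
Proof.
move=> Hdir /set0Pn [ev0 Hev0].
pose a : {ffun (E + V)%type -> R} :=
  [ffun i => match i with inl e => ((inl e : (E+V)%type) \in S)%:R
                        | inr v => - ((inr v : (E+V)%type) \in S)%:R end].
have Hval : forall ev, dotf a (rpoint R ev) =
   ((inl ev.1 : (E+V)%type) \in S)%:R - ((inr ev.2 : (E+V)%type) \in S)%:R.
  by move=> ev; rewrite dotf_rpoint !ffunE.
have Hle : forall ev, ev \in G -> dotf a (rpoint R ev) <= 0.
  move=> ev HG; rewrite Hval; have := Hdir ev HG.
  by case: (inl ev.1 \in S); case: (inr ev.2 \in S) => //= _; rewrite ?subrr ?subr0 ?sub0r ?lerN10.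
exists a, 0; split.
- split.
    move: Hev0; rewrite inE => /andP [HG Hc].
    have := Hdir ev0 HG; move: Hc; rewrite /in_cut.
    case: (inl ev0.1 \in S); case E2: (inr ev0.2 \in S) => //= _ _.
    exists (inr ev0.2); rewrite ffunE E2 /=; by rewrite oppr_eq0 oner_eq0.
  move=> x [lam [Hpos Hsum Hx]].
  have -> : dotf a x = \sum_(ev in G) lam ev * dotf a (rpoint R ev).
    rewrite /dotf; under eq_bigr => i _ do rewrite Hx big_distrr.
    rewrite exchange_big /=; apply: eq_bigr => ev _; rewrite big_distrr.
    by apply: eq_bigr => i _; rewrite mulrCA.
  apply: sumr_le0 => ev HG; exact: mulr_ge0_le0 (Hpos _ HG) (Hle _ HG).
- move=> ev; rewrite inE => /andP [HG Hc]; rewrite Hval.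
  have := Hdir ev HG; move: Hc; rewrite /in_cut.
  by case: (inl ev.1 \in S); case: (inr ev.2 \in S) => //= _ _; rewrite sub0r oppr_eq0 oner_eq0.
- move=> ev HG; rewrite inE HG /= /in_cut negbK => /eqP Heq.
  by rewrite Hval Heq subrr.
Qed.
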